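(* Let $a\in\mathbb{R}$, $b\in(a,\infty)$, $h\in\mathbb{N}$, $v_1,\dots,v_h,w_1,\dots,w_h\in(0,\infty)$, let $f,p\in C(\mathbb{R},\mathbb{R})$ satisfy for all $x\in\mathbb{R}$ that $p(x)\ge0$ and $p^{-1}((0,\infty))=(a,b)$, with $\mathcal{L}$, $I_i^\theta$, $\operatorname{Lip}$ as in the context. Assume $\operatorname{Lip}(f)<\min_{i\in\{1,\dots,h\}}v_iw_i$, let $\theta\in\mathbb{R}^{h+1}$ satisfy $(\nabla\mathcal{L})(\theta)=0$, and let $i,j\in\{1,\dots,h\}$ satisfy $I_i^\theta\cap I_j^\theta\neq\emptyset$. Then $I_i^\theta\subseteq I_j^\theta$ or $I_j^\theta\subseteq I_i^\theta$.
   Context: Let $\mathfrak{c}(x)=\min\{\max\{x,0\},1\}$. For $F\in C(\mathbb{R},\mathbb{R})$ let $\operatorname{Lip}(F)=\sup_{x,y\in[a,b],x\ne y}\frac{|F(x)-F(y)|}{|x-y|}$. For $\theta=(\theta_1,\dots,\theta_{h+1})\in\mathbb{R}^{h+1}$ and $i\in\{1,\dots,h\}$ let $\psi_i(\theta)=-[w_i]^{-1}\theta_i$, $I_i^\theta=(\psi_i(\theta),\psi_i(\theta)+[w_i]^{-1})\cap(a,b)$, $\mathcal{N}^\theta(x)=\theta_{h+1}+\sum_{i=1}^hv_i\mathfrak{c}(w_ix+\theta_i)$, and $\mathcal{L}(\theta)=\int_a^b(\mathcal{N}^\theta(x)-f(x))^2p(x)\,\mathrm{d}x$ ($\mathcal{L}$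 is continuously differentiable). *)

(* Defs.v *)
From Stdlib Require Import Reals Lra.
From Coquelicot Require Import Coquelicot.
Open Scope R_scope.

Definition clip (x : R) : R := Rmin (Rmax x 0) 1.

Fixpoint sumR (n : nat) (g : nat -> R) : R :=
  match n with
  | O => 0
  | S m => sumR m g + g (S m)
  end.

Definition Lip (a b : R) (F : R -> R) : Rbar :=
  Lub_Rbar (fun r => exists x y, a <= x <= b /\ a <= y <= b /\ x <> y /\
                        r = Rabs (F x - F y) / Rabs (x - y)).

(* parameter vectors theta in R^{h+1} are represented as nat -> R,
   using indices 1..h+1 *)
Definition psi (w : nat -> R) (theta : nat -> R) (i : nat) : R :=
  - / (w i) * theta i.

Definition Iint (a b : R) (w : nat -> R) (theta : nat -> R) (i : nat) (x : R) : Prop :=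
  psi w theta i < x < psi w theta i + / (w i) /\ a < x < b.

Definition NN (h : nat) (v w : nat -> R) (theta : nat -> R) (x : R) : R :=
  theta (S h) + sumR h (fun i => v i * clip (w i * x + theta i)).

Definition Loss (a b : R) (h : nat) (v w : nat -> R) (f p : R -> R)
  (theta : nat -> R) : R :=
  RInt (fun x => (NN h v w theta x - f x) ^ 2 * p x) a b.

Definition shift (theta : nat -> R) (k : nat) (t : R) : nat -> R :=
  fun m => if Nat.eqb m k then theta m + t else theta m.

(* Main.v *)
Require Import Defs.
From Stdlib Require Import Reals Lra Lia.
From Coquelicot Require Import Coquelicot.
Open Scope R_scope.

Lemma clip_lip x y : Rabs (clip x - clip y) <= Rabs (x - y).
Proof. unfold clip, Rmin, Rmax; repeat destruct Rle_dec; unfold Rabs; repeat destruct Rcase_abs; lra. Qed.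
Lemma clip_mono x y : x <= y -> clip x <= clip y.
Proof. unfold clip, Rmin, Rmax; repeat destruct Rle_dec; lra. Qed.
Lemma clip_0 x : x <= 0 -> clip x = 0.
Proof. unfold clip, Rmin, Rmax; repeat destruct Rle_dec; lra. Qed.
Lemma clip_1 x : 1 <= x -> clip x = 1.
Proof. unfold clip, Rmin, Rmax; repeat destruct Rle_dec; lra. Qed.
Lemma clip_id x : 0 <= x <= 1 -> clip x = x.
Proof. unfold clip, Rmin, Rmax; repeat destruct Rle_dec; lra. Qed.
Lemma clip_D u t : 0 <= t -> 0 <= clip (u + t) - clip u <= t.
Proof. unfold clip, Rmin, Rmax; repeat destruct Rle_dec; lra. Qed.

Definition CT (F : R -> R) := forall x, continuity_pt F x.
Lemma CT_ext f g : (forall x, f x = g x) -> CT f -> CT g.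
Proof. intros E H x. apply continuity_pt_ext with f; auto. Qed.
Lemma CT_plus f g : CT f -> CT g -> CT (fun x => f x + g x).
Proof. intros H1 H2 x. exact (continuity_pt_plus f g x (H1 x) (H2 x)). Qed.
Lemma CT_minus f g : CT f -> CT g -> CT (fun x => f x - g x).
Proof. intros H1 H2 x. exact (continuity_pt_minus f g x (H1 x) (H2 x)). Qed.
Lemma CT_mult f g : CT f -> CT g -> CT (fun x => f x * g x).
Proof. intros H1 H2 x. exact (continuity_pt_mult f g x (H1 x) (H2 x)). Qed.
Lemma CT_const c : CT (fun _ => c).
Proof. intros x. apply continuity_pt_const. intros a b; reflexivity. Qed.
Lemma CT_id : CT (fun x => x).
Proof. intros x. apply derivable_continuous_pt, derivable_pt_id. Qed.
Lemma CT_pow2 f : CT f -> CT (fun x => f x ^ 2).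
Proof. intros H. apply CT_ext with (fun x => f x * f x). intros; ring. apply CT_mult; auto. Qed.
Lemma CT_clip0 : CT clip.
Proof.
  intros x0 eps Heps. exists eps. split; auto. intros x [_ Hx].
  simpl in *. unfold R_dist in *. eapply Rle_lt_trans. apply clip_lip. exact Hx.
Qed.
Lemma CT_clip f : CT f -> CT (fun x => clip (f x)).
Proof. intros H x. apply (continuity_pt_comp f clip x (H x) (CT_clip0 (f x))). Qed.
Lemma CT_cont F : CT F -> forall x, continuous F x.
Proof. intros H x. apply continuity_pt_filterlim, H. Qed.
Lemma CT_ex F a b : CT F -> ex_RInt F a b.
Proof. intros H. apply (@ex_RInt_continuous R_CompleteNormedModule). intros; apply CT_cont, H. Qed.

Lemma CT_sumR n (G : nat -> R -> R) : (forall m, CT (G m)) -> CT (fun x => sumR n (fun m => G m x)).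
Proof.
  intros H. induction n; simpl.
  - apply CT_const.
  - apply CT_plus; auto.
Qed.

Lemma CT_NN h v w theta : CT (NN h v w theta).
Proof.
  unfold NN. apply CT_plus. apply CT_const.
  apply (CT_sumR h (fun m x => v m * clip (w m * x + theta m))).
  intros m. apply CT_mult. apply CT_const. apply CT_clip. apply CT_plus. apply CT_mult. apply CT_const. apply CT_id. apply CT_const.
Qed.

Lemma sumR_shift (v w theta : nat -> R) k t x n : (1 <= k)%nat ->
  sumR n (fun m => v m * clip (w m * x + shift theta k t m)) =
  sumR n (fun m => v m * clip (w m * x + theta m)) +
  (if Nat.leb k n then v k * (clip (w k * x + theta k + t) - clip (w k * x + theta k)) else 0).
Proof.
  intros Hk. induction n; simpl.
  - destruct k; [lia|]. simpl. lra.
  - rewrite IHn. unfold shift.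
    destruct (Nat.eqb_spec (S n) k); destruct (Nat.leb_spec k n); destruct (Nat.leb_spec k (S n)); try lia.
    + subst. replace (w (S n) * x + (theta (S n) + t)) with (w (S n) * x + theta (S n) + t) by ring. ring.
    + ring.
    + ring.
Qed.

Lemma NN_shift h v w theta k t x : (1 <= k <= h)%nat ->
  NN h v w (shift theta k t) x = NN h v w theta x + v k * (clip (w k * x + theta k + t) - clip (w k * x + theta k)).
Proof.
  intros Hk. unfold NN. rewrite sumR_shift by lia.
  destruct (Nat.leb_spec k h); try lia.
  unfold shift at 1. destruct (Nat.eqb_spec (S h) k); try lia. ring.
Qed.

Lemma sumR_ge0 n (A B : nat -> R) : (forall m, (1 <= m <= n)%nat -> B m <= A m) ->
  sumR n A - sumR n B >= 0.
Proof.
  induction n; intros H; simpl; [lra|].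
  assert (B (S n) <= A (S n)) by (apply H; lia).
  assert (sumR n A - sumR n B >= 0) by (apply IHn; intros; apply H; lia). lra.
Qed.

Lemma sumR_ge n (A B : nat -> R) k : (forall m, (1 <= m <= n)%nat -> B m <= A m) -> (1 <= k <= n)%nat ->
  sumR n A - sumR n B >= A k - B k.
Proof.
  revert k. induction n; intros k H Hk; [lia|]. simpl.
  destruct (Nat.eq_dec k (S n)).
  - subst. assert (sumR n A - sumR n B >= 0) by (apply sumR_ge0; intros; apply H; lia).
    lra.
  - assert (sumR n A - sumR n B >= A k - B k) by (apply IHn; [intros; apply H; lia | lia]).
    assert (B (S n) <= A (S n)) by (apply H; lia). lra.
Qed.

Lemma RInt_scal' F c lo hi : CT F -> RInt (fun x => c * F x) lo hi = c * RInt F lo hi.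
Proof.
  intros H. exact (RInt_scal (V := R_CompleteNormedModule) F lo hi c (CT_ex _ _ _ H)).
Qed.
Lemma RInt_plus' F G lo hi : CT F -> CT G -> RInt (fun x => F x + G x) lo hi = RInt F lo hi + RInt G lo hi.
Proof.
  intros H1 H2. exact (RInt_plus (V := R_CompleteNormedModule) F G lo hi (CT_ex _ _ _ H1) (CT_ex _ _ _ H2)).
Qed.
Lemma RInt_lin F1 F2 c1 c2 lo hi : CT F1 -> CT F2 ->
  RInt (fun x => c1 * F1 x + c2 * F2 x) lo hi = c1 * RInt F1 lo hi + c2 * RInt F2 lo hi.
Proof.
  intros H1 H2. rewrite RInt_plus'. rewrite !RInt_scal'; auto.
  all: apply CT_mult; auto; apply CT_const.
Qed.

Lemma RInt_zero F lo hi : lo <= hi -> (forall x, lo <= x <= hi -> F x = 0) -> RInt F lo hi = 0.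
Proof.
  intros Hl H. rewrite (RInt_ext (V := R_CompleteNormedModule) F (fun _ => 0)).
  rewrite RInt_const. unfold scal; simpl. unfold mult; simpl. ring.
  intros x. rewrite Rmin_left, Rmax_right by lra. intros; apply H; lra.
Qed.

Lemma Chasles F a b c : CT F -> RInt F a b + RInt F b c = RInt F a c.
Proof. intros H. exact (RInt_Chasles (V := R_CompleteNormedModule) F a b c (CT_ex _ _ _ H) (CT_ex _ _ _ H)). Qed.

Lemma piece_lo (F : R -> R) lo hi c K : lo <= hi -> CT F ->
  (forall x, lo <= x <= hi -> x <= c -> F x = 0) ->
  (forall x, lo <= x <= hi -> Rabs (F x) <= K) -> 0 <= K ->
  Rabs (RInt F lo hi) <= Rmax 0 (hi - c) * K.
Proof.
  intros Hl HC Hz Hb HK.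
  destruct (Rle_dec c lo).
  - eapply Rle_trans. apply abs_RInt_le_const; auto. apply CT_ex; auto.
    apply Rmult_le_compat_r; auto. eapply Rle_trans. 2: apply Rmax_r. lra.
  - destruct (Rle_dec hi c).
    + rewrite RInt_zero; auto. rewrite Rabs_R0. apply Rmult_le_pos; auto. apply Rmax_l.
      intros; apply Hz; lra.
    + rewrite <- (Chasles F lo c hi HC). rewrite (RInt_zero F lo c) by (try lra; intros; apply Hz; lra).
      rewrite Rplus_0_l. eapply Rle_trans. apply abs_RInt_le_const. lra. apply CT_ex; auto.
      intros; apply Hb; lra. apply Rmult_le_compat_r; auto. apply Rmax_r.
Qed.

Lemma deriv_zero_lin (G : R -> R) c K : derivable_pt_lim G 0 0 -> 0 <= K ->
  (forall t, 0 < t -> Rabs (G t - G 0 - c * t) <= K * t ^ 2) -> c = 0.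
Proof.
  intros Hd HK Hb. destruct (Req_dec c 0) as [|Hc]; auto. exfalso.
  assert (Hac : 0 < Rabs c) by (apply Rabs_pos_lt; auto).
  destruct (Hd (Rabs c / 2)) as [del Hdel]. lra.
  set (t := Rmin (del / 2) (Rabs c / (2 * (K + 1)))).
  assert (Ht0 : 0 < t). { unfold t. apply Rmin_pos. destruct del; simpl; lra. apply Rdiv_lt_0_compat; lra. }
  assert (Htd : Rabs t < del). { rewrite Rabs_pos_eq by lra. unfold t. eapply Rle_lt_trans. apply Rmin_l. destruct del; simpl; lra. }
  assert (Htc : t * (2 * (K + 1)) <= Rabs c).
  { unfold t. assert (Rmin (del / 2) (Rabs c / (2 * (K + 1))) <= Rabs c / (2 * (K + 1))) by apply Rmin_r.
    apply Rmult_le_compat_r with (r := 2 * (K + 1)) in H; [|lra].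
    replace (Rabs c / (2 * (K + 1)) * (2 * (K + 1))) with (Rabs c) in H by (field; lra). exact H. }
  specialize (Hdel t (Rgt_not_eq _ _ Ht0) Htd). rewrite Rplus_0_l, Rminus_0_r in Hdel.
  assert (Hg : Rabs (G t - G 0) < Rabs c / 2 * t).
  { replace (G t - G 0) with (((G t - G 0) / t) * t) by (field; lra).
    rewrite Rabs_mult, (Rabs_pos_eq t) by lra. apply Rmult_lt_compat_r; lra. }
  specialize (Hb t Ht0).
  assert (Rabs (c * t) <= Rabs (G t - G 0 - c * t) + Rabs (G t - G 0)).
  { replace (c * t) with (-(G t - G 0 - c * t) + (G t - G 0)) at 1 by ring.
    eapply Rle_trans. apply Rabs_triang. rewrite Rabs_Ropp. lra. }
  rewrite Rabs_mult, (Rabs_pos_eq t) in H by lra.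
  assert (Rabs c * t < K * t ^ 2 + Rabs c / 2 * t) by lra.
  assert (Rabs c / 2 < K * t).
  { apply Rmult_lt_reg_r with t. lra. replace (K * t * t) with (K * t ^ 2) by ring. lra. }
  assert (K * t * (2 * (K+1)) <= K * Rabs c) by (rewrite Rmult_assoc; apply Rmult_le_compat_l; lra).
  nra.
Qed.

Lemma le_div_mul wk y z : 0 < wk -> y <= z / wk -> wk * y <= z.
Proof. intros H H1. apply Rmult_le_compat_l with (r := wk) in H1; [|lra].
  replace (wk * (z / wk)) with z in H1 by (field; lra). exact H1. Qed.
Lemma ge_div_mul wk y z : 0 < wk -> z / wk <= y -> z <= wk * y.
Proof. intros H H1. apply Rmult_le_compat_l with (r := wk) in H1; [|lra].
  replace (wk * (z / wk)) with z in H1 by (field; lra). exact H1. Qed.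

Lemma bound_ab (F : R -> R) a b : a <= b -> CT F -> exists M, 0 <= M /\ forall x, a <= x <= b -> Rabs (F x) <= M.
Proof.
  intros Hab HF. destruct (continuity_ab_maj (fun x => Rabs (F x)) a b Hab) as [Mx [H1 H2]].
  intros c _. apply (continuity_pt_comp F Rabs c (HF c)). apply Rcontinuity_abs.
  exists (Rabs (F Mx)). split; auto. apply Rabs_pos.
Qed.

Ltac req := match goal with |- ?A = ?B => change (@eq R A B) end.
Ltac ct := repeat match goal with
  | |- CT (fun _ => _) => apply CT_const
  | H : CT ?F |- CT ?F => exact H
  | H : forall t, CT (?F t) |- CT (?F _) => apply H
  | |- CT (fun x => x) => apply CT_id
  | |- CT (fun x => _ + _) => apply CT_plus
  | |- CT (fun x => _ - _) => apply CT_minus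
  | |- CT (fun x => _ * _) => apply CT_mult
  | |- CT (fun x => _ ^ 2) => apply CT_pow2
  | |- CT (fun x => clip _) => apply CT_clip
  | |- CT (NN _ _ _ _) => apply CT_NN
  end.

Lemma zero_int a b h v w f p theta k :
  a < b ->
  (forall k, (1 <= k <= h)%nat -> 0 < v k /\ 0 < w k) ->
  CT f -> CT p ->
  (forall x, 0 <= p x) ->
  (forall x, 0 < p x <-> a < x < b) ->
  (1 <= k <= h)%nat ->
  is_derive (fun t => Loss a b h v w f p (shift theta k t)) 0 0 ->
  Rmax a (psi w theta k) < Rmin b (psi w theta k + / w k) ->
  RInt (fun x => (NN h v w theta x - f x) * p x) (Rmax a (psi w theta k)) (Rmin b (psi w theta k + / w k)) = 0.
Proof.
  intros Hab Hvw Hf Hp Hp0 Hpp Hk Hder Hab'.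
  destruct (Hvw k Hk) as [Hv Hw].
  set (ps := psi w theta k) in *. set (al := Rmax a ps) in *. set (be := Rmin b (ps + / w k)) in *.
  set (g := fun x => NN h v w theta x - f x).
  set (vk := v k) in *. set (wk := w k) in *. set (th := theta k).
  assert (Hu : forall x, wk * x + th = wk * (x - ps)). { intros. unfold ps, psi, th. fold wk. field. apply Rgt_not_eq. exact Hw. }
  assert (pa : p a = 0). { destruct (Hp0 a) as [H|H]; auto. apply Hpp in H; lra. }
  assert (pb : p b = 0). { destruct (Hp0 b) as [H|H]; auto. apply Hpp in H; lra. }
  assert (Hal1 : a <= al) by (unfold al; apply Rmax_l).
  assert (Hal2 : ps <= al) by (unfold al; apply Rmax_r).
  assert (Hal3 : a < al -> al = ps) by (unfold al, Rmax; destruct Rle_dec; intros; lra).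
  assert (Hbe1 : be <= b) by (unfold be; apply Rmin_l).
  assert (Hbe2 : be <= ps + / wk) by (unfold be; apply Rmin_r).
  assert (Hbe3 : be < b -> be = ps + / wk) by (unfold be, Rmin; destruct (Rle_dec b (ps + / wk)); intros; lra).
  set (D := fun t x => clip (wk * x + th + t) - clip (wk * x + th)).
  assert (Cg : CT g) by (apply CT_minus; auto; apply CT_NN).
  assert (CD : forall t, CT (D t)).
  { intros t. unfold D. apply CT_minus; apply CT_clip; repeat apply CT_plus; try apply CT_const;
    apply CT_mult; try apply CT_const; apply CT_id. }
  set (G := fun t => Loss a b h v w f p (shift theta k t)).
  assert (HG : forall t, G t = RInt (fun x => (g x + vk * D t x) ^ 2 * p x) a b).
  { intros t. unfold G, Loss. apply RInt_ext. intros x _. rewrite NN_shift by lia. unfold g, D, vk, wk, th. match goal with |- ?A = ?B => change (@eq R A B) end. ring. }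
  assert (Hdiff : forall t, G t - G 0 = 2 * vk * RInt (fun x => g x * p x * D t x) a b
                              + vk ^ 2 * RInt (fun x => D t x ^ 2 * p x) a b).
  { intros t. rewrite !HG.
    transitivity (RInt (fun x => 1 * ((g x + vk * D t x) ^ 2 * p x) + (-1) * ((g x + vk * D 0 x) ^ 2 * p x)) a b).
    { rewrite RInt_lin. ring. all: ct. }
    rewrite <- RInt_lin. 2,3: ct.
    apply RInt_ext. intros x _. req. unfold D. rewrite Rplus_0_r. ring. }
  destruct (bound_ab (fun x => g x * p x) a b) as [M [HM0 HM]]. lra. apply CT_mult; auto.
  destruct (bound_ab p a b) as [P [HP0 HP]]. lra. auto.
  set (S := RInt (fun x => g x * p x) al be).
  assert (HDb : forall t x, 0 <= t -> 0 <= D t x <= t) by (intros; unfold D; apply clip_D; auto).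
  assert (Hmain : 2 * vk * S = 0).
  { apply (deriv_zero_lin G (2 * vk * S) (2 * vk * (2 * (M / wk)) + vk ^ 2 * ((b - a) * P))).
    - apply is_derive_Reals. exact Hder.
    - assert (0 <= M / wk) by (apply Rdiv_le_0_compat; lra).
      assert (0 <= vk ^ 2) by apply pow2_ge_0.
      assert (0 <= (b - a) * P) by (apply Rmult_le_pos; lra).
      apply Rplus_le_le_0_compat; apply Rmult_le_pos; lra.
    - intros t Ht. rewrite Hdiff.
      set (I1 := RInt (fun x => g x * p x * D t x) a al).
      set (I2 := RInt (fun x => g x * p x * (D t x - t)) al be).
      set (I3 := RInt (fun x => g x * p x * D t x) be b).
      set (Q := RInt (fun x => D t x ^ 2 * p x) a b).
      assert (CgpD : CT (fun x => g x * p x * D t x)) by (repeat apply CT_mult; auto).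
      assert (Hsplit : RInt (fun x => g x * p x * D t x) a b = I1 + I2 + t * S).
      { rewrite <- (Chasles _ a al b CgpD), <- (Chasles _ al be b CgpD).
        assert (I3 = 0).
        { unfold I3. apply RInt_zero. lra. intros x Hx.
          destruct (Req_dec x b). subst x. rewrite pb. ring.
          rewrite Hbe3 in Hx by lra. unfold D. rewrite !Hu.
          assert (1 <= wk * (x - ps)).
          { apply ge_div_mul; auto. replace (1 / wk) with (/ wk) by (field; lra). lra. }
          rewrite (clip_1 (wk * (x - ps))), (clip_1 (wk * (x - ps) + t)) by lra. ring. }
        assert (RInt (fun x => g x * p x * D t x) al be = I2 + t * S).
        { unfold I2, S. req. transitivity (1 * RInt (fun x => g x * p x * (D t x - t)) al be + t * RInt (fun x => g x * p x) al be); [|ring].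
          rewrite <- (RInt_lin _ _ 1 t). apply RInt_ext. intros; req; ring. all: ct. }
        fold I1. fold I3. lra. }
      rewrite Hsplit.
      assert (HI1 : Rabs I1 <= t / wk * (M * t)).
      { unfold I1. replace (t / wk) with (Rmax 0 (al - (al - t / wk))).
        apply piece_lo; auto.
        - intros x Hx Hx2. destruct (Req_dec x a). subst x. rewrite pa. ring.
          rewrite Hal3 in Hx2 by lra. unfold D. rewrite !Hu.
          assert (wk * (x - ps) <= - t).
          { apply le_div_mul; auto. replace (- t / wk) with (- (t / wk)) by (field; lra). lra. }
          rewrite (clip_0 (wk * (x - ps))), (clip_0 (wk * (x - ps) + t)) by lra. ring.
        - intros x Hx. rewrite Rabs_mult. specialize (HDb t x (Rlt_le _ _ Ht)).
          rewrite (Rabs_pos_eq (D t x)) by lra. apply Rmult_le_compat; try lra. apply Rabs_pos. apply HM. lra.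
        - apply Rmult_le_pos; lra.
        - rewrite Rmax_right. ring. replace (al - (al - t / wk)) with (t / wk) by ring. apply Rlt_le, Rdiv_lt_0_compat; lra. }
      assert (HI2 : Rabs I2 <= t / wk * (M * t)).
      { unfold I2. replace (t / wk) with (Rmax 0 (be - (be - t / wk))).
        apply piece_lo; auto. lra.
        - repeat apply CT_mult; auto. apply CT_minus; auto. apply CT_const.
        - intros x Hx Hx2. unfold D. rewrite !Hu.
          assert (0 <= wk * (x - ps)) by (apply Rmult_le_pos; lra).
          assert (wk * (x - ps) <= 1 - t).
          { apply le_div_mul; auto. replace ((1 - t) / wk) with (/ wk - t / wk) by (field; lra). lra. }
          rewrite (clip_id (wk * (x - ps))), (clip_id (wk * (x - ps) + t)) by lra. ring.
        - intros x Hx. rewrite Rabs_mult. specialize (HDb t x (Rlt_le _ _ Ht)).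
          rewrite (Rabs_left1 (D t x - t)) by lra. apply Rmult_le_compat; try lra. apply Rabs_pos. apply HM. lra.
        - apply Rmult_le_pos; lra.
        - rewrite Rmax_right. ring. replace (be - (be - t / wk)) with (t / wk) by ring. apply Rlt_le, Rdiv_lt_0_compat; lra. }
      assert (HQ : Rabs Q <= (b - a) * (t ^ 2 * P)).
      { unfold Q. apply abs_RInt_le_const. lra. apply CT_ex. apply CT_mult; auto. apply CT_pow2; auto.
        intros x Hx. rewrite Rabs_mult. specialize (HDb t x (Rlt_le _ _ Ht)).
        rewrite Rabs_pos_eq by apply pow2_ge_0. apply Rmult_le_compat; try lra. apply pow2_ge_0. apply Rabs_pos.
        apply pow_incr; lra. apply HP; lra. }
      replace (2 * vk * (I1 + I2 + t * S) + vk ^ 2 * Q - 2 * vk * S * t) with (2 * vk * (I1 + I2) + vk ^ 2 * Q) by ring.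
      eapply Rle_trans. apply Rabs_triang. rewrite !Rabs_mult, (Rabs_pos_eq 2), (Rabs_pos_eq vk) by lra.
      rewrite (Rabs_pos_eq (vk ^ 2)) by apply pow2_ge_0.
      assert (Rabs (I1 + I2) <= 2 * (t / wk * (M * t))) by (eapply Rle_trans; [apply Rabs_triang | lra]).
      assert (2 * vk * Rabs (I1 + I2) <= 2 * vk * (2 * (t / wk * (M * t)))) by (apply Rmult_le_compat_l; lra).
      assert (vk ^ 2 * Rabs Q <= vk ^ 2 * ((b - a) * (t ^ 2 * P))) by (apply Rmult_le_compat_l; [apply pow2_ge_0 | lra]).
      replace ((2 * vk * (2 * (M / wk)) + vk ^ 2 * ((b - a) * P)) * t ^ 2) with
        (2 * vk * (2 * (t / wk * (M * t))) + vk ^ 2 * ((b - a) * (t ^ 2 * P))) by (field; lra).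
      lra. }
  assert (S = 0). { apply Rmult_eq_reg_l with (2 * vk). lra. lra. }
  exact H.
Qed.

Lemma RInt_pos F lo hi : lo < hi -> CT F -> (forall x, lo < x < hi -> 0 < F x) -> 0 < RInt F lo hi.
Proof. intros H HC Hp. apply RInt_gt_0; auto. intros; apply CT_cont; auto. Qed.
Lemma RInt_neg F lo hi : lo < hi -> CT F -> (forall x, lo < x < hi -> F x < 0) -> RInt F lo hi < 0.
Proof.
  intros H HC Hp. rewrite <- (RInt_zero (fun _ => 0) lo hi) by (auto; lra).
  apply RInt_lt; auto; intros; apply CT_cont; auto. apply CT_const.
Qed.

Lemma key (g p : R -> R) ai bi aj bj a b : CT g -> CT p -> (forall x, a < x < b -> 0 < p x) ->
  a <= ai -> bj <= b -> ai < aj -> aj < bi -> bi < bj ->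
  (forall x y, ai <= x -> x < y -> y <= bi -> g x < g y) ->
  (forall x y, aj <= x -> x < y -> y <= bj -> g x < g y) ->
  RInt (fun x => g x * p x) ai bi = 0 -> RInt (fun x => g x * p x) aj bj = 0 -> False.
Proof.
  intros Cg Cp Hp H1 H2 H3 H4 H5 Mi Mj Zi Zj.
  assert (Cgp : CT (fun x => g x * p x)) by (apply CT_mult; auto).
  assert (Gb : 0 < g bi).
  { destruct (Rlt_le_dec 0 (g bi)) as [|Hn]; auto. exfalso.
    assert (RInt (fun x => g x * p x) ai bi < 0).
    { apply RInt_neg; auto. lra. intros x Hx. assert (g x < g bi) by (apply Mi; lra).
      assert (0 < p x) by (apply Hp; lra). nra. }
    lra. }
  assert (Ga : g aj < 0).
  { destruct (Rlt_le_dec (g aj) 0) as [|Hn]; auto. exfalso.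
    assert (0 < RInt (fun x => g x * p x) aj bj).
    { apply RInt_pos; auto. lra. intros x Hx. assert (g aj < g x) by (apply Mj; lra).
      assert (0 < p x) by (apply Hp; lra). nra. }
    lra. }
  assert (RInt (fun x => g x * p x) ai aj < 0).
  { apply RInt_neg; auto. intros x Hx. assert (g x < g aj) by (apply Mi; lra).
    assert (0 < p x) by (apply Hp; lra). nra. }
  assert (0 < RInt (fun x => g x * p x) bi bj).
  { apply RInt_pos; auto. intros x Hx. assert (g bi < g x) by (apply Mj; lra).
    assert (0 < p x) by (apply Hp; lra). nra. }
  rewrite <- (Chasles _ ai aj bi Cgp) in Zi. rewrite <- (Chasles _ aj bi bj Cgp) in Zj. lra.
Qed.

Lemma Iint_iff a b w theta k x : Iint a b w theta k x <->
  Rmax a (psi w theta k) < x < Rmin b (psi w theta k + / w k).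
Proof.
  unfold Iint. unfold Rmax, Rmin. destruct (Rle_dec a (psi w theta k)); destruct (Rle_dec b (psi w theta k + / w k)); lra.
Qed.

Lemma lip_use a b f c x y : Rbar_lt (Lip a b f) (Finite c) -> a <= x <= b -> a <= y <= b -> x < y ->
  f y - f x < c * (y - x).
Proof.
  intros HL Hx Hy Hxy. unfold Lip in HL.
  destruct (Lub_Rbar_correct (fun r => exists x y, a <= x <= b /\ a <= y <= b /\ x <> y /\
                        r = Rabs (f x - f y) / Rabs (x - y))) as [Hub _].
  assert (Hin := Hub (Rabs (f y - f x) / Rabs (y - x))).
  assert (Rbar_lt (Rabs (f y - f x) / Rabs (y - x)) c).
  { eapply Rbar_le_lt_trans. apply Hin. exists y, x. repeat split; try lra. exact HL. }
  simpl in H. rewrite (Rabs_pos_eq (y - x)) in H by lra.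
  assert (Rabs (f y - f x) < c * (y - x)).
  { apply Rmult_lt_compat_r with (r := y - x) in H; [|lra].
    replace (Rabs (f y - f x) / (y - x) * (y - x)) with (Rabs (f y - f x)) in H by (field; lra). exact H. }
  pose proof (Rle_abs (f y - f x)). lra.
Qed.

Lemma mono a b h v w f theta k x y :
  (forall k, (1 <= k <= h)%nat -> 0 < v k /\ 0 < w k) ->
  Rbar_lt (Lip a b f) (Finite (v k * w k)) -> (1 <= k <= h)%nat ->
  Rmax a (psi w theta k) <= x -> x < y -> y <= Rmin b (psi w theta k + / w k) ->
  NN h v w theta x - f x < NN h v w theta y - f y.
Proof.
  intros Hvw HL Hk Hx Hxy Hy. destruct (Hvw k Hk) as [Hv Hw].
  assert (Hal1 : a <= Rmax a (psi w theta k)) by apply Rmax_l.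
  assert (Hal2 : psi w theta k <= Rmax a (psi w theta k)) by apply Rmax_r.
  assert (Hbe1 : Rmin b (psi w theta k + / w k) <= b) by apply Rmin_l.
  assert (Hbe2 : Rmin b (psi w theta k + / w k) <= psi w theta k + / w k) by apply Rmin_r.
  assert (Hf := lip_use a b f (v k * w k) x y HL ltac:(lra) ltac:(lra) Hxy).
  assert (Hu : forall z, w k * z + theta k = w k * (z - psi w theta k)). { intros. unfold psi. field. lra. }
  assert (Hs := sumR_ge h (fun m => v m * clip (w m * y + theta m)) (fun m => v m * clip (w m * x + theta m)) k).
  simpl in Hs.
  assert (Hs' : sumR h (fun m => v m * clip (w m * y + theta m)) - sumR h (fun m => v m * clip (w m * x + theta m)) >=
     v k * clip (w k * y + theta k) - v k * clip (w k * x + theta k)).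
  { apply Hs; auto. intros m Hm. destruct (Hvw m Hm). apply Rmult_le_compat_l. lra. apply clip_mono. nra. }
  rewrite !Hu in Hs'.
  assert (0 <= w k * (x - psi w theta k)) by (apply Rmult_le_pos; lra).
  assert (w k * (y - psi w theta k) <= 1).
  { assert (w k * (y - psi w theta k) <= w k * / w k) by (apply Rmult_le_compat_l; lra).
    rewrite Rinv_r in H0; lra. }
  assert (w k * (x - psi w theta k) <= w k * (y - psi w theta k)) by (apply Rmult_le_compat_l; lra).
  rewrite !clip_id in Hs' by lra.
  unfold NN. lra.
Qed.

Theorem lemma2p5 (a b : R) (h : nat) (v w : nat -> R) (f p : R -> R)
  (theta : nat -> R) (i j : nat) :
  a < b ->
  (forall k, (1 <= k <= h)%nat -> 0 < v k /\ 0 < w k) ->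
  (forall x, continuous f x) ->
  (forall x, continuous p x) ->
  (forall x, 0 <= p x) ->
  (forall x, 0 < p x <-> a < x < b) ->
  (forall k, (1 <= k <= h)%nat -> Rbar_lt (Lip a b f) (Finite (v k * w k))) ->
  (* gradient of the loss vanishes at theta: all partial derivatives are 0 *)
  (forall k, (1 <= k <= S h)%nat ->
     is_derive (fun t => Loss a b h v w f p (shift theta k t)) 0 0) ->
  (1 <= i <= h)%nat -> (1 <= j <= h)%nat ->
  (exists x, Iint a b w theta i x /\ Iint a b w theta j x) ->
  (forall x, Iint a b w theta i x -> Iint a b w theta j x) \/
  (forall x, Iint a b w theta j x -> Iint a b w theta i x).
Proof.
  intros Hab Hvw Hf Hp Hp0 Hpp HL Hd Hi Hj [x0 [Hx0i Hx0j]].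
  assert (Cf : CT f) by (intros x; apply continuity_pt_filterlim, Hf).
  assert (Cp : CT p) by (intros x; apply continuity_pt_filterlim, Hp).
  rewrite Iint_iff in Hx0i, Hx0j.
  set (ai := Rmax a (psi w theta i)) in *. set (bi := Rmin b (psi w theta i + / w i)) in *.
  set (aj := Rmax a (psi w theta j)) in *. set (bj := Rmin b (psi w theta j + / w j)) in *.
  assert (Zi := zero_int a b h v w f p theta i Hab Hvw Cf Cp Hp0 Hpp Hi (Hd i ltac:(lia)) ltac:(fold ai bi; lra)).
  assert (Zj := zero_int a b h v w f p theta j Hab Hvw Cf Cp Hp0 Hpp Hj (Hd j ltac:(lia)) ltac:(fold aj bj; lra)).
  fold ai bi in Zi. fold aj bj in Zj.
  assert (Mi := fun x y => mono a b h v w f theta i x y Hvw (HL i Hi) Hi).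
  assert (Mj := fun x y => mono a b h v w f theta j x y Hvw (HL j Hj) Hj).
  fold ai bi in Mi. fold aj bj in Mj.
  assert (Cg : CT (fun x => NN h v w theta x - f x)) by (apply CT_minus; auto; apply CT_NN).
  assert (Hpos : forall x, a < x < b -> 0 < p x) by (intros; apply Hpp; auto).
  assert (a <= ai) by apply Rmax_l. assert (a <= aj) by apply Rmax_l.
  assert (bi <= b) by apply Rmin_l. assert (bj <= b) by apply Rmin_l.
  destruct (Rle_dec aj ai); destruct (Rle_dec bi bj).
  - left. intros x. rewrite !Iint_iff. fold ai bi aj bj. lra.
  - destruct (Req_dec aj ai).
    + right. intros x. rewrite !Iint_iff. fold ai bi aj bj. lra.
    + exfalso. apply (key _ p aj bj ai bi a b Cg Cp Hpos); auto; lra.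
  - destruct (Req_dec bi bj).
    + right. intros x. rewrite !Iint_iff. fold ai bi aj bj. lra.
    + exfalso. apply (key _ p ai bi aj bj a b Cg Cp Hpos); auto; lra.
  - right. intros x. rewrite !Iint_iff. fold ai bi aj bj. lra.
Qed.
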